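(* Let $\mathcal V\subseteq B(H)$ be an operator system, let $p\in\mathcal V$ be a projection in $B(H)$, and let $q=I-p$. If $a,b,c\in\mathcal V$ with $a=a^*$ and $b=b^*$, then $pap+pcq+qc^*p+qbq\ge0$ in $B(H)$ if and only if $\begin{pmatrix}a&c\\c^*&b\end{pmatrix}\in C(p\oplus q)$.
   Context: $C(p\oplus q)=\{y\in M_2(\mathcal V): y=y^*,\ (p\oplus q)\,y\,(p\oplus q)\ge0 \text{ in } B(H^2)\}$ where $p\oplus q=\mathrm{diag}(p,q)$. *)

(* Defs.v *)
From mathcomp Require Import all_boot all_order all_algebra.
Import Order.TTheory GRing.Theory Num.Theory.
From mathcomp Require Import complex.
From mathcomp Require Import Rstruct.
From Stdlib Require Import Reals.
Set Implicit Arguments. Unset Strict Implicit. Unset Printing Implicit Defensive.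
Local Open Scope ring_scope.

Notation CC := (complex R).

Section Hilbert.
Variable H : lmodType CC.
Variable ip : H -> H -> CC.   (* inner product, linear in the first slot *)

(* ip is an inner product making H a (complete) complex Hilbert space.
   Ordering on CC: 0 <= z iff z is a nonnegative real. *)
Definition is_hilbert : Prop :=
  [/\ (forall (a : CC) (x y z : H), ip (a *: x + y) z = a * ip x z + ip y z),
      (forall x y : H, ip y x = (ip x y)^*),
      (forall x : H, 0 <= ip x x),
      (forall x : H, ip x x = 0 -> x = 0) &
      (* completeness w.r.t. the norm ||x|| = sqrt (ip x x) (stated with squares) *)
      (forall u : nat -> H,
         (forall e : CC, 0 < e -> exists N : nat, forall m n : nat, leq N m -> leq N n ->
            ip (u m - u n) (u m - u n) < e) ->
         exists l : H, forall e : CC, 0 < e -> exists N : nat, forall n : nat, leq N n ->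
            ip (u n - l) (u n - l) < e)].

Definition bounded_op (T : H -> H) : Prop :=
  (forall (a : CC) (x y : H), T (a *: x + y) = a *: T x + T y) /\
  exists M : CC, 0 <= M /\ forall x, ip (T x) (T x) <= M * ip x x.

Definition is_adjoint (T S : H -> H) : Prop :=
  forall x y : H, ip (T x) y = ip x (S y).

Definition operator_system (V : (H -> H) -> Prop) : Prop :=
  [/\ (forall T, V T -> bounded_op T),
      V (fun x => x),
      (forall (a : CC) T U, V T -> V U -> V (fun x => a *: T x + U x)) &
      (forall T, V T -> exists S, V S /\ is_adjoint T S)].

Definition is_projection (p : H -> H) : Prop :=
  [/\ bounded_op p, (forall x, p (p x) = p x) & is_adjoint p p].

Definition op_pos (T : H -> H) : Prop := forall x : H, 0 <= ip (T x) x.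

(* A 2x2 operator matrix T acts on H^2 = H ⊕ H (vectors x : 'I_2 -> H) by
   (T x)_i = \sum_j T i j (x j);  the inner product on H^2 is
   <x, y> = \sum_i ip (x i) (y i).  T >= 0 in B(H^2): *)
Definition mx_pos (T : 'M[H -> H]_2) : Prop :=
  forall x : 'I_2 -> H, 0 <= \sum_(i < 2) ip (\sum_(j < 2) T i j (x j)) (x i).

(* y equals its adjoint in M_2(B(H)): adj(y)_{ij} = adj(y_{ji}). *)
Definition mx_selfadj (y : 'M[H -> H]_2) : Prop :=
  forall i j : 'I_2, is_adjoint (y j i) (y i j).

Definition mx2 (a c d b : H -> H) : 'M[H -> H]_2 :=
  \matrix_(i < 2, j < 2)
     if i == ord0 then (if j == ord0 then a else c) else (if j == ord0 then d else b).

Definition compl (p : H -> H) : H -> H := fun x => x - p x.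

(* C(p ⊕ q) with q = I - p:
   { y in M_2(V) : y = y^*, (p ⊕ q) y (p ⊕ q) >= 0 in B(H^2) }. *)
Definition Cpq (V : (H -> H) -> Prop) (p : H -> H) (y : 'M[H -> H]_2) : Prop :=
  let d := mx2 p (fun _ => 0) (fun _ => 0) (compl p) in
  [/\ (forall i j, V (y i j)),
      mx_selfadj y &
      mx_pos (\matrix_(i < 2, j < 2) (fun x => \sum_(k < 2) \sum_(l < 2) d i k (y k l (d l j x))))].

End Hilbert.

(* Main.v *)
Require Import Defs.
From mathcomp Require Import all_boot all_order all_algebra.
Import Order.TTheory GRing.Theory Num.Theory.
From mathcomp Require Import complex.
From mathcomp Require Import Rstruct.
From Stdlib Require Import Reals.
From Stdlib Require Import FunctionalExtensionality.
Local Open Scope ring_scope.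

Theorem lemma5p1 (H : lmodType CC) (ip : H -> H -> CC) (hH : is_hilbert ip)
  (V : (H -> H) -> Prop) (hV : operator_system ip V)
  (p : H -> H) (hpV : V p) (hp : is_projection ip p)
  (a b c cs : H -> H) (haV : V a) (hbV : V b) (hcV : V c)
  (hcs : is_adjoint ip c cs) (ha : is_adjoint ip a a) (hb : is_adjoint ip b b) :
  let q := compl p in
  op_pos ip (fun x => p (a (p x)) + p (c (q x)) + q (cs (p x)) + q (b (q x)))
  <-> Cpq ip V p (mx2 a c cs b).
Proof.
case: hH => iplin ipconj ippos ipdef _.
case: hV => Vb _ Vlin Vadj.
case: hp => [[plin _] pp padj].
have ipD x y z : ip (x + y) z = ip x z + ip y z.
  by have := iplin 1 x y z; rewrite scale1r mul1r.
have ip0 z : ip 0 z = 0.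
  by apply/(@addrI _ (ip 0 z)); rewrite -ipD !addr0.
have ipC x y : ip x y = (ip y x)^* by rewrite ipconj.
have ipDr x y z : ip z (x + y) = ip z x + ip z y.
  by rewrite ipC ipD rmorphD [ip z x]ipC [ip z y]ipC.
have ipB x y z : ip (x - y) z = ip x z - ip y z.
  by have := iplin (-1) y x z; rewrite scaleN1r mulN1r addrC (addrC (ip x z)).
have ipBr x y z : ip z (x - y) = ip z x - ip z y.
  by rewrite ipC ipB rmorphB [ip z x]ipC [ip z y]ipC.
have ip0r z : ip z 0 = 0 by rewrite ipC ip0 rmorph0.
have linD (f : H -> H) : V f -> forall x y, f (x + y) = f x + f y.
  by move=> /Vb [fl _] x y; have := fl 1 x y; rewrite !scale1r.
have lin0 (f : H -> H) : V f -> f 0 = 0.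
  by move=> Vf; apply/(@addrI _ (f 0)); rewrite -linD // !addr0.
have linN (f : H -> H) : V f -> forall x, f (- x) = - f x.
  by move=> Vf x; apply/(@addrI _ (f x)); rewrite -linD // !subrr lin0.
have adjU (f g h : H -> H) : is_adjoint ip f g -> is_adjoint ip f h -> g = h.
  move=> hg hh; apply: functional_extensionality => y.
  apply/eqP; rewrite -subr_eq0; apply/eqP; apply: ipdef.
  rewrite ipB (ipC (g y)) (ipC (h y)) -hg -hh subrr //.
have csV : V cs.
  by case: (Vadj c hcV) => S [VS hS]; rewrite -(adjU _ _ _ hS hcs).
move=> q.
have qE x : q x = x - p x by [].
have pq x : p (q x) = 0 by rewrite qE linD // linN // pp subrr.
have qp x : q (p x) = 0 by rewrite qE pp subrr.
have qq x : q (q x) = q x by rewrite {1}qE pq subr0.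
have qlinD x y : q (x + y) = q x + q y.
  by rewrite !qE linD // opprD addrACA.
have qadj : is_adjoint ip q q.
  by move=> x y; rewrite !qE ipB ipBr padj.
have p0 : p 0 = 0 by apply: lin0.
have q0 : q 0 = 0 by rewrite qE p0 subrr.
have a0 := lin0 _ haV; have b0 := lin0 _ hbV; have c0 := lin0 _ hcV; have cs0 := lin0 _ csV.
have key (x : 'I_2 -> H) : \sum_(i < 2) ip (\sum_(j < 2) (\matrix_(i < 2, j < 2) (fun x => \sum_(k < 2) \sum_(l < 2) mx2 p (fun _ => 0) (fun _ => 0) (compl p) i k (mx2 a c cs b k l (mx2 p (fun _ => 0) (fun _ => 0) (compl p) l j x)))) i j (x j)) (x i) = ip (p (a (p (x ord0))) + p (c (q (x (lift ord0 ord0))))) (x ord0) + ip (q (cs (p (x ord0))) + q (b (q (x (lift ord0 ord0))))) (x (lift ord0 ord0)).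
  rewrite !big_ord_recl !big_ord0 !mxE /=.
  rewrite !big_ord_recl !big_ord0 !mxE /= -/q.
  by rewrite c0 a0 cs0 b0 p0 q0 !addr0 !add0r.
have pqo u v : ip (p u) (q v) = 0 by rewrite padj pq ip0r.
have qpo u v : ip (q u) (p v) = 0 by rewrite qadj qp ip0r.
have sp u w x0 x1 : ip (p u + q w) (p x0 + q x1) = ip (p u) x0 + ip (q w) x1.
  by rewrite ipD [ip (p u) _]ipDr [ip (q w) _]ipDr pqo qpo -padj pp -qadj qq addr0 add0r.
split.
  move=> hT; split.
  - move=> i j; rewrite mxE; case: i => [[|[|i]] Hi] //; case: j => [[|[|j]] Hj] //=.
  - move=> i j; rewrite !mxE; case: i => [[|[|i]] Hi] //; case: j => [[|[|j]] Hj] //=.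
    by move=> x y; rewrite ipC -hcs [ip x (c y)]ipC.
  - move=> x; rewrite key.
    have := hT (p (x ord0) + q (x (lift ord0 ord0))).
    rewrite linD // pp pq addr0 qlinD qp qq add0r.
    have E u v : p u + p v = p (u + v) by rewrite linD.
    have F u v : q u + q v = q (u + v) by rewrite qlinD.
    by rewrite -addrA !E !F sp.
case=> _ _ hm x.
have := hm (fun _ => x); rewrite key.
by rewrite -ipD addrA.
Qed.
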